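(* Let $r,s,t,\ell,m$ be integers with $1 \le t \le \ell \le m$, $1 \le r \le \ell$ and $1 \le s \le t$. Then $$\mathfrak{w}_r^{(s)}(t;\ell,m) = \frac{q-1}{q}\,q^{\binom{s}{2}}\left(\frac{[m]_q!}{[m-t]_q!} - (-1)^s \frac{[m-s]_q!}{[m-t]_q!} \right)q^{s(\ell-r)}\,q^{\binom{t-s}{2}}\,{r\brack s}_q {\ell-r\brack t-s}_q.$$
   Context: $q$ is a prime power. For an $\ell\times m$ matrix $M=(m_{ij})$ over $\mathbb{F}_q$ and $1\le r\le\ell$, $\tau_r(M)=m_{11}+\cdots+m_{rr}$ and $\underline{M}_r$ is the $r\times m$ matrix of the first $r$ rows of $M$. $\mathfrak w^{(s)}_r(t;\ell,m)$ is the number of $\ell\times m$ matrices $M$ over $\mathbb{F}_q$ with $\mathrm{rk}(M)=t$, $\mathrm{rk}(\underline{M}_r)=s$ and $\tau_r(M)\ne 0$. The Gaussian factorial is $[n]_q!=\prod_{i=1}^n(q^i-1)$ (with $[0]_q!=1$), and ${n\brack k}_q$ is the Gaussian binomial coefficient, equal to $0$ if $k<0$ or $k>n$. *)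

(* Defs.v *)
From HB Require Import structures.
From mathcomp Require Import all_boot all_order all_algebra all_field.
Set Implicit Arguments. Unset Strict Implicit. Unset Printing Implicit Defensive.
Import Order.TTheory GRing.Theory Num.Theory.
Local Open Scope ring_scope.

Definition top_rows (F : Type) (l m r : nat) (hr : (r <= l)%N)
  (M : 'M[F]_(l, m)) : 'M[F]_(r, m) := rowsub (widen_ord hr) M.

Definition tau (F : nzRingType) (l m r : nat) (hr : (r <= l)%N) (hrm : (r <= m)%N)
  (M : 'M[F]_(l, m)) : F := \sum_(i < r) M (widen_ord hr i) (widen_ord hrm i).

Definition wcount (F : finFieldType) (r s t l m : nat) (hr : (r <= l)%N)
  (hrm : (r <= m)%N) : nat :=
  #|[set M : 'M[F]_(l, m) | [&& \rank M == t,
        \rank (top_rows hr M) == s & tau hr hrm M != 0]]|.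

Definition gfact (q n : nat) : rat := \prod_(1 <= i < n.+1) ((q ^ i)%:R - 1).

Definition gbinom (q n k : nat) : rat :=
  if (k <= n)%N then gfact q n / (gfact q k * gfact q (n - k)) else 0.

(* Main.v *)
Require Import Defs.
From HB Require Import structures.
From mathcomp Require Import all_boot all_order all_algebra all_field.
From mathcomp Require Import ring zify.
Set Implicit Arguments. Unset Strict Implicit. Unset Printing Implicit Defensive.
Import Order.TTheory GRing.Theory Num.Theory.
Local Open Scope ring_scope.


Section QB.
Variable Q : nat.
Hypothesis Q1 : (1 < Q)%N.
Local Notation x := (Q%:R : rat).

Lemma xfact_neq0 i : (0 < i)%N -> x ^+ i - 1 != 0.
Proof.
move=> i0; rewrite subr_eq0 -natrX pnatr_eq1.
by rewrite -(exp1n i) eqn_exp2r // neq_ltn Q1 orbT.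
Qed.

Lemma gfactE n : gfact Q n = \prod_(1 <= i < n.+1) (x ^+ i - 1).
Proof. by apply: eq_bigr => i _; rewrite natrX. Qed.

Lemma gfact0 : gfact Q 0 = 1.
Proof. by rewrite /gfact big_geq. Qed.

Lemma gfactS n : gfact Q n.+1 = gfact Q n * (x ^+ n.+1 - 1).
Proof. by rewrite !gfactE big_nat_recr. Qed.

Lemma gfact_neq0 n : gfact Q n != 0.
Proof.
elim: n => [|n IH]; first by rewrite gfact0 oner_eq0.
by rewrite gfactS mulf_neq0 // xfact_neq0.
Qed.

Lemma gbinom0 n : gbinom Q n 0 = 1.
Proof.
rewrite /gbinom leq0n subn0 gfact0 mul1r divff //; exact: gfact_neq0.
Qed.

Lemma gbinomnn n : gbinom Q n n = 1.
Proof.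
rewrite /gbinom leqnn subnn gfact0 mulr1 divff //; exact: gfact_neq0.
Qed.

Lemma gbinom_gt n k : (n < k)%N -> gbinom Q n k = 0.
Proof. by rewrite /gbinom ltnNge => /negbTE ->. Qed.

Lemma gbinom_split k a :
  gbinom Q (k + a) k = gfact Q (k + a) / (gfact Q k * gfact Q a).
Proof. by rewrite /gbinom leq_addr addKn. Qed.

Lemma pascal n k :
  gbinom Q n.+1 k.+1 = x ^+ k.+1 * gbinom Q n k.+1 + gbinom Q n k.
Proof.
case: (ltngtP k n) => [kn|nk|->]; last first.
- by rewrite !gbinomnn gbinom_gt // mulr0 add0r.
- by rewrite !gbinom_gt ?mulr0 ?addr0 // ltnS ltnW.
have [a ->] : exists a, n = (k + a.+1)%N by exists (n - k.+1)%N; rewrite addnS -addSn subnKC.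
have h1 : gbinom Q (k + a.+1).+1 k.+1 = gfact Q (k + a.+1).+1 / (gfact Q k.+1 * gfact Q a.+1).
  exact: (gbinom_split k.+1 a.+1).
have h2 : gbinom Q (k + a.+1) k.+1 = gfact Q (k + a.+1) / (gfact Q k.+1 * gfact Q a).
  by rewrite addnS -addSn gbinom_split.
rewrite h1 h2 gbinom_split.
have f1 := gfact_neq0 k; have f2 := gfact_neq0 a; have f3 := gfact_neq0 (k + a.+1).
have e1 := xfact_neq0 (ltn0Sn k); have e2 := xfact_neq0 (ltn0Sn a).
have ex : x ^+ (k + a.+1).+1 = x ^+ k.+1 * x ^+ a.+1 by rewrite -exprD addSn.
rewrite !gfactS ex.
move: f1 f2 f3 e1 e2; move: (gfact Q k) (gfact Q a) (gfact Q (k + a.+1)) (Q%:R ^+ k.+1) (Q%:R ^+ a.+1) => G1 G2 G3 X Y f1 f2 f3 e1 e2.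
by field; rewrite ?f1 ?f2 ?f3 ?e1 ?e2.
Qed.

Lemma gbinom_ratio r k :
  (x ^+ k.+1 - 1) * gbinom Q r k.+1 = (x ^+ (r - k) - 1) * gbinom Q r k.
Proof.
case: (leqP r k) => [rk|kr].
  by rewrite gbinom_gt ?ltnS // mulr0 (eqP (_ : (r - k)%N == 0%N)) ?subn_eq0 // expr0 subrr mul0r.
have [a ->] : exists a, r = (k + a.+1)%N by exists (r - k.+1)%N; rewrite addnS -addSn subnKC.
have h2 : gbinom Q (k + a.+1) k.+1 = gfact Q (k + a.+1) / (gfact Q k.+1 * gfact Q a).
  by rewrite addnS -addSn gbinom_split.
rewrite h2 gbinom_split addKn.
have f1 := gfact_neq0 k; have f2 := gfact_neq0 a; have f3 := gfact_neq0 (k + a.+1).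
have e1 := xfact_neq0 (ltn0Sn k); have e2 := xfact_neq0 (ltn0Sn a).
rewrite !gfactS.
move: f1 f2 f3 e1 e2; move: (gfact Q k) (gfact Q a) (gfact Q (k + a.+1)) (Q%:R ^+ k.+1) (Q%:R ^+ a.+1) => G1 G2 G3 X Y f1 f2 f3 e1 e2.
by field; rewrite ?f1 ?f2 ?f3 ?e1 ?e2.
Qed.

Definition Pq b k : rat := \prod_(i < k) (x ^+ b - x ^+ i).

Lemma PqS b k : Pq b k.+1 = Pq b k * (x ^+ b - x ^+ k).
Proof. by rewrite /Pq big_ord_recr. Qed.

Lemma PqE b k : (k <= b)%N -> Pq b k = x ^+ 'C(k, 2) * (gfact Q b / gfact Q (b - k)).
Proof.
elim: k => [|k IH] kb.
  by rewrite /Pq big_ord0 bin0n expr0 subn0 mul1r divff // gfact_neq0.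
rewrite PqS IH; last exact: ltnW.
have [c ec] : exists c, (b - k = c.+1)%N by exists (b - k.+1)%N; rewrite subnSK.
have ec' : (b - k.+1 = c)%N by rewrite subnS ec.
rewrite ec ec' gfactS binS bin1 exprD.
have hb : x ^+ b = x ^+ k * x ^+ c.+1 by rewrite -exprD -ec subnKC // ltnW.
rewrite hb.
have f1 := gfact_neq0 b; have f2 := gfact_neq0 c.
have e2 := xfact_neq0 (ltn0Sn c).
move: f1 f2 e2; move: (gfact Q b) (gfact Q c) (Q%:R ^+ 'C(k, 2)) (Q%:R ^+ k) (Q%:R ^+ c.+1) => G1 G2 X Y Z f1 f2 e2.
by field; rewrite ?f1 ?f2 ?f3 ?e1 ?e2.
Qed.

End QB.

Section S.
Variable F : finFieldType.
Local Notation q := #|F|.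

Lemma card_rowspace n m (A : 'M[F]_(n, m)) :
  #|[set u : 'rV[F]_m | (u <= A)%MS]| = (q ^ \rank A)%N.
Proof.
have -> : [set u : 'rV[F]_m | (u <= A)%MS] =
   [set v *m row_base A | v in [set: 'rV[F]_(\rank A)]].
  apply/setP => u; rewrite inE; apply/idP/imsetP.
    rewrite -(eq_row_base A) => /submxP [v ->]; by exists v; rewrite ?inE.
  by move=> [v _ ->]; rewrite -(eq_row_base A) submxMl.
rewrite card_imset; last exact: row_free_inj (row_base_free A).
rewrite cardsT card_mx mul1n. by [].
Qed.

Lemma rank_col_mx_row n m (A : 'M[F]_(n, m)) (u : 'rV[F]_m) :
  \rank (col_mx A u) = (\rank A + ~~ (u <= A)%MS)%N.
Proof.
rewrite -addsmxE; have [uA|nuA] := boolP (u <= A)%MS.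
  by rewrite addn0; have /addsmx_idPl -> := uA.
have u0 : u != 0 by apply: contraNneq nuA => ->; rewrite sub0mx.
have := mxrank_sum_cap A u; rewrite rank_rV u0 addn1 /=.
have : (\rank (A :&: u)%MS < \rank u)%N.
  by rewrite (ltn_leqif (mxrank_leqif_sup (capmxSr A u))) sub_capmx submx_refl andbT.
rewrite rank_rV u0 ltnS leqn0 => /eqP ->; by rewrite addn0.
Qed.

Lemma card_not_rowspace n m (A : 'M[F]_(n, m)) :
  #|[set u : 'rV[F]_m | ~~ (u <= A)%MS]| = (q ^ m - q ^ \rank A)%N.
Proof.
have := cardsC [set u : 'rV[F]_m | (u <= A)%MS].
rewrite card_rowspace card_mx mul1n => <-.
rewrite addKn; apply: eq_card => u; by rewrite !inE.
Qed.

Lemma sum_cst (T : finType) (P : pred T) (x : rat) :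
  \sum_(i | P i) x = x * (#|[set i | P i]|)%:R.
Proof. rewrite sumr_const mulr_natr; congr (_ *+ _); apply: eq_card => i; by rewrite inE. Qed.

Lemma sum_append n m k (g : 'M[F]_(n, m) -> rat) :
  \sum_(B : 'M[F]_(n + 1, m) | \rank B == k) g (usubmx B) =
  \sum_(A : 'M[F]_(n, m)) g A * ((\rank A == k)%:R * (q ^ k)%:R
      + ((\rank A).+1 == k)%:R * ((q ^ m)%:R - (q ^ \rank A)%:R)).
Proof.
rewrite big_mkcond /=.
rewrite (reindex (fun p : 'M[F]_(n, m) * 'rV[F]_m => col_mx p.1 p.2)) /=; last first.
  exists (fun B : 'M[F]_(n + 1, m) => (usubmx B, dsubmx B)) => [[A u] _ | B _] /=.
    by rewrite col_mxKu col_mxKd.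
  by rewrite vsubmxK.
rewrite -(pair_big xpredT xpredT (fun A u => if \rank (col_mx A u) == k then g (usubmx (col_mx A u)) else 0)) /=.
apply: eq_bigr => A _.
under eq_bigr do rewrite col_mxKu rank_col_mx_row.
rewrite -big_mkcond /= (bigID (fun u => (u <= A)%MS)) /=.
rewrite (eq_bigl (fun u => (\rank A == k) && (u <= A)%MS)); last first.
  by move=> u; case: (u <= A)%MS; rewrite /= ?addn0 ?andbT ?andbF.
rewrite [X in _ + X](eq_bigl (fun u => ((\rank A).+1 == k) && ~~ (u <= A)%MS)); last first.
  by move=> u; case: (u <= A)%MS; rewrite /= ?andbT ?andbF // addn1.
rewrite (sum_cst (fun u => (\rank A == k) && (u <= A)%MS)) (sum_cst (fun u => ((\rank A).+1 == k) && ~~ (u <= A)%MS)) /=.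
have c0 : #|[set _ : 'rV[F]_m | false]| = 0%N by apply: eq_card0 => u; rewrite inE.
case: eqP => [<-|_]; case: eqP => [e|_] /=; rewrite ?card_rowspace ?card_not_rowspace.
- by move/esym: e => /n_Sn.
- by rewrite c0 mulr0 addr0 mul1r mul0r addr0.
- rewrite c0 mulr0 add0r mul0r add0r mul1r natrB //.
  by rewrite leq_exp2l ?rank_leq_col // finRing_gt1.
- by rewrite c0 !mulr0 !mul0r addr0 mulr0.
Qed.

Definition trp p n m (A : 'M[F]_(n, m)) : F :=
  \sum_(i < n) \sum_(j < m) (if ((i : nat) == j) && (i < p)%N then A i j else 0).

Lemma trp_tr p n m (A : 'M[F]_(n, m)) : trp p A^T = trp p A.
Proof.
rewrite /trp exchange_big /=; apply: eq_bigr => i _; apply: eq_bigr => j _.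
rewrite mxE; case: (eqVneq (i : nat) j) => [->|ne] //=; by rewrite eq_sym (negbTE ne).
Qed.

Lemma trp_col p n m (A : 'M[F]_(n, m)) (u : 'rV[F]_m) : (p <= n)%N ->
  trp p (col_mx A u) = trp p A.
Proof.
move=> pn; rewrite /trp big_split_ord /= big_ord1 /=.
rewrite [X in _ + X]big1 ?addr0; last first.
  move=> j _; rewrite ltnNge (leq_trans pn) ?leq_addr // andbF //.
by apply: eq_bigr => i _; apply: eq_bigr => j _; rewrite col_mxEu.
Qed.

Lemma trp_big p n m (A : 'M[F]_(n, m)) : (n <= p)%N -> trp p A = trp n A.
Proof.
move=> np; rewrite /trp; apply: eq_bigr => i _; apply: eq_bigr => j _.
by rewrite ltn_ord (leq_trans (ltn_ord i) np).
Qed.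

Lemma trp_row0 p n m m' (A : 'M[F]_(n, m)) (x : 'M[F]_(n, m')) : (n <= m)%N ->
  trp p (row_mx A x) = trp p A.
Proof.
move=> nm; rewrite /trp; apply: eq_bigr => i _.
rewrite big_split_ord /= [X in _ + X]big1 ?addr0; last first.
  move=> j _; case: eqP => //= e; move: (ltn_ord i); rewrite e /=.
  by rewrite ltnNge (leq_trans nm) ?leq_addr.
by apply: eq_bigr => j _; rewrite row_mxEl.
Qed.

Lemma trp_sq p (C : 'M[F]_(p, p + 1)) (u : 'rV[F]_(p + 1)) :
  trp (p + 1) (col_mx C u) = trp p C + u 0 (rshift p ord0).
Proof.
rewrite /trp big_split_ord /= big_ord1 /=; congr (_ + _).
  apply: eq_bigr => i _; apply: eq_bigr => j _.
  by rewrite col_mxEu /= ltn_ord (ltn_addr _ (ltn_ord i)).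
have pp : (p < p + 1)%N by rewrite addn1.
rewrite big_split_ord /= big_ord1 /= addn0 eqxx pp /=.
rewrite big1 ?add0r; first by rewrite col_mxEd.
by move=> j _; rewrite eq_sym (ltn_eqF (ltn_ord j)).
Qed.

Definition Sr n m k (g : 'M[F]_(n, m) -> rat) : rat :=
  \sum_(A : 'M[F]_(n, m) | \rank A == k) g A.

Lemma append_rec n m k (g : 'M[F]_(n, m) -> rat) :
  \sum_(B : 'M[F]_(n + 1, m) | \rank B == k) g (usubmx B) =
  (q ^ k)%:R * Sr k g +
  (if k is k'.+1 then ((q ^ m)%:R - (q ^ k')%:R) * Sr k' g else 0).
Proof.
rewrite sum_append /Sr; under eq_bigr do rewrite mulrDr.
rewrite big_split /=; congr (_ + _).
  rewrite [RHS]mulr_sumr [RHS]big_mkcond; apply: eq_bigr => A _.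
  by case: (\rank A == k); rewrite /= ?mul1r ?mul0r ?mulr0 // mulrC.
case: k => [|k].
  by rewrite big1 // => A _; rewrite /= mul0r mulr0.
rewrite [RHS]mulr_sumr [RHS]big_mkcond; apply: eq_bigr => A _.
rewrite eqSS; case: eqP => [->|_]; rewrite /= ?mul1r ?mul0r ?mulr0 //.
by rewrite mulrC.
Qed.

Definition Ew p n m k : rat :=
  \sum_(A : 'M[F]_(n, m) | \rank A == k) ((q%:R : rat) * (trp p A == 0)%:R - 1).

Definition Rc n m k : rat := \sum_(A : 'M[F]_(n, m) | \rank A == k) 1.

Lemma Ew_tr p n m k : Ew p n m k = Ew p m n k.
Proof.
rewrite /Ew (reindex (@trmx F m n)) /=; last first.
  by exists (@trmx F n m) => A _; rewrite trmxK.
by apply: eq_big => [A|A _]; rewrite ?mxrank_tr ?trp_tr.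
Qed.

Lemma Ew_append p n m k : (p <= n)%N ->
  Ew p (n + 1) m k = (q ^ k)%:R * Ew p n m k +
  (if k is k'.+1 then ((q ^ m)%:R - (q ^ k')%:R) * Ew p n m k' else 0).
Proof.
move=> pn; rewrite /Ew -append_rec; apply: eq_bigr => B _.
by rewrite -{1}(vsubmxK B) trp_col.
Qed.

Lemma Rc_append n m k :
  Rc (n + 1) m k = (q ^ k)%:R * Rc n m k +
  (if k is k'.+1 then ((q ^ m)%:R - (q ^ k')%:R) * Rc n m k' else 0).
Proof. by rewrite /Rc -(append_rec _ (fun _ => 1)). Qed.

Lemma fiber_eq n m (C : 'M[F]_(n, m)) (j : 'I_m) (a b : F) : col j C != 0 ->
  (#|[set u : 'rV[F]_m | (u <= C)%MS && (u ord0 j == b)]| <=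
   #|[set u : 'rV[F]_m | (u <= C)%MS && (u ord0 j == a)]|)%N.
Proof.
move=> /eqP nz.
have [i nzi] : exists i, C i j != 0.
  case: (pickP (fun i => C i j != 0)) => [i ?|h]; first by exists i.
  by case: nz; apply/colP => i; rewrite !mxE; have := h i => /negbFE /eqP.
pose v0 := (C i j)^-1 *: row i C.
have v0C : (v0 <= C)%MS by rewrite scalemx_sub ?row_sub.
have v0j : v0 ord0 j = 1 by rewrite !mxE mulVf.
rewrite -(card_imset _ (addIr ((a - b) *: v0))).
apply: subset_leq_card; apply/subsetP => w /imsetP [u]; rewrite inE => /andP [uC /eqP ub] ->.
rewrite inE addmx_sub ?scalemx_sub ?row_sub //= mxE [X in _ + X]mxE ub v0j mulr1.
by rewrite addrC subrK.
Qed.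

Lemma fiber_sum n m (C : 'M[F]_(n, m)) (j : 'I_m) (t : F) : col j C != 0 ->
  \sum_(u : 'rV[F]_m | (u <= C)%MS) ((q%:R : rat) * (t + u ord0 j == 0)%:R - 1) = 0.
Proof.
move=> nz.
pose f a := #|[set u : 'rV[F]_m | (u <= C)%MS && (u ord0 j == a)]|.
have fe a : f a = f (- t) by apply/eqP; rewrite eqn_leq !fiber_eq.
have tot : (q ^ \rank C)%N = (q * f (- t))%N.
  rewrite -card_rowspace -sum1dep_card.
  rewrite (partition_big (fun u : 'rV[F]_m => u ord0 j) xpredT) //=.
  rewrite (eq_bigr (fun _ => f (- t))); last first.
    by move=> a _; rewrite sum1dep_card -/(f a) fe.
  by rewrite sum_nat_const; congr (_ * _)%N; exact: eq_card.
rewrite big_split /= sumrN -mulr_sumr.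
rewrite (sum_cst (fun u : 'rV[F]_m => (u <= C)%MS)) mul1r.
have -> : \sum_(u : 'rV[F]_m | (u <= C)%MS) ((t + u ord0 j == 0)%:R : rat) =
          \sum_(u : 'rV[F]_m | (u <= C)%MS && (t + u ord0 j == 0)) 1.
  by rewrite big_mkcondr /=; apply: eq_bigr => u _; case: (_ == _).
rewrite (sum_cst (fun u : 'rV[F]_m => (u <= C)%MS && (t + u ord0 j == 0))) mul1r.
rewrite (eq_card (B := [set u : 'rV[F]_m | (u <= C)%MS && (u ord0 j == - t)])); last first.
  by move=> u; rewrite !inE addrC addr_eq0.
rewrite -/(f (- t)) card_rowspace tot natrM.
by rewrite subrr.
Qed.

Definition wt (x : F) : rat := (q%:R : rat) * (x == 0)%:R - 1.

Lemma zero_col_row n m (C : 'M[F]_(n, m)) j (u : 'rV[F]_m) :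
  col j C = 0 -> (u <= C)%MS -> u ord0 j = 0.
Proof.
move=> c0 /submxP [D ->]; rewrite mxE big1 // => i _.
have : col j C i ord0 = 0 by rewrite c0 mxE.
by rewrite mxE => ->; rewrite mulr0.
Qed.

Lemma sum_all_wt m (j : 'I_m) (t : F) :
  \sum_(u : 'rV[F]_m) wt (t + u ord0 j) = 0.
Proof.
rewrite -[RHS](@fiber_sum m m 1%:M j t); last first.
  apply/eqP => /colP /(_ j); rewrite !mxE eqxx /= => /eqP; by rewrite oner_eq0.
by apply: eq_big => [u|u _]; rewrite ?submx1.
Qed.

Lemma inner_sq n m (C : 'M[F]_(n, m)) j (t : F) k :
  \sum_(u : 'rV[F]_m | \rank (col_mx C u) == k) wt (t + u ord0 j) =
  if col j C == 0 then
    (((\rank C == k)%:R - ((\rank C).+1 == k)%:R) * (q ^ \rank C)%:R * wt t)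
  else 0.
Proof.
under eq_bigl do rewrite rank_col_mx_row.
rewrite (bigID (fun u => (u <= C)%MS)) /=.
rewrite (eq_bigl (fun u => (\rank C == k) && (u <= C)%MS)); last first.
  by move=> u; case: (u <= C)%MS; rewrite /= ?addn0 ?andbT ?andbF.
rewrite [X in _ + X](eq_bigl (fun u => ((\rank C).+1 == k) && ~~ (u <= C)%MS)); last first.
  by move=> u; case: (u <= C)%MS; rewrite /= ?andbT ?andbF // addn1.
have hall := sum_all_wt j t.
rewrite (bigID (fun u => (u <= C)%MS)) /= in hall.
have hnot : \sum_(u : 'rV[F]_m | ~~ (u <= C)%MS) wt (t + u ord0 j) =
            - \sum_(u : 'rV[F]_m | (u <= C)%MS) wt (t + u ord0 j).
  by apply/eqP; rewrite -addr_eq0 addrC hall.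
have hin : \sum_(u : 'rV[F]_m | (u <= C)%MS) wt (t + u ord0 j) =
           if col j C == 0 then (q ^ \rank C)%:R * wt t else 0.
  case: eqP => [c0|/eqP nz]; last exact: fiber_sum.
  rewrite (eq_bigr (fun _ => wt t)); last by move=> u uC; rewrite (zero_col_row c0 uC) addr0.
  by rewrite (sum_cst (fun u : 'rV[F]_m => (u <= C)%MS)) card_rowspace mulrC.
case: eqP => [rk|_]; case: eqP => [rk1|_] /=.
- by move: rk1; rewrite -rk => /esym /n_Sn.
- rewrite big_pred0_eq addr0 hin subr0 mul1r; by case: (_ == _).
- rewrite big_pred0_eq add0r hnot hin sub0r mulN1r; case: (_ == _) => //.
  by rewrite mulNr.
- by rewrite !big_pred0_eq addr0; case: (_ == _) => //; rewrite !mul0r.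
Qed.

Lemma sum_col_pairs n m (G : 'M[F]_(n + 1, m) -> rat) :
  \sum_(B : 'M[F]_(n + 1, m)) G B =
  \sum_(C : 'M[F]_(n, m)) \sum_(u : 'rV[F]_m) G (col_mx C u).
Proof.
rewrite (reindex (fun p : 'M[F]_(n, m) * 'rV[F]_m => col_mx p.1 p.2)) /=; last first.
  exists (fun B : 'M[F]_(n + 1, m) => (usubmx B, dsubmx B)) => [[A u] _ | B _] /=.
    by rewrite col_mxKu col_mxKd.
  by rewrite vsubmxK.
by rewrite -(pair_big xpredT xpredT (fun A u => G (col_mx A u))).
Qed.

Lemma sum_row_pairs n m m' (G : 'M[F]_(n, m + m') -> rat) :
  \sum_(B : 'M[F]_(n, m + m')) G B =
  \sum_(A : 'M[F]_(n, m)) \sum_(x : 'M[F]_(n, m')) G (row_mx A x).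
Proof.
rewrite (reindex (fun p : 'M[F]_(n, m) * 'M[F]_(n, m') => row_mx p.1 p.2)) /=; last first.
  exists (fun B : 'M[F]_(n, m + m') => (lsubmx B, rsubmx B)) => [[A u] _ | B _] /=.
    by rewrite row_mxKl row_mxKr.
  by rewrite hsubmxK.
by rewrite -(pair_big xpredT xpredT (fun A u => G (row_mx A u))).
Qed.

Lemma Ew_wt p n m k : Ew p n m k = \sum_(A : 'M[F]_(n, m) | \rank A == k) wt (trp p A).
Proof. by []. Qed.

Lemma Ew_sq p k :
  Ew (p + 1) (p + 1) (p + 1) k = (q ^ k)%:R * Ew p p p k -
    (if k is k'.+1 then (q ^ k')%:R * Ew p p p k' else 0).
Proof.
rewrite Ew_wt big_mkcond sum_col_pairs.
rewrite (eq_bigr (fun C : 'M[F]_(p, p + 1) =>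
   if col (rshift p ord0) C == 0 then
    (((\rank C == k)%:R - ((\rank C).+1 == k)%:R) * (q ^ \rank C)%:R * wt (trp p C))
   else 0)); last first.
  move=> C _; rewrite -inner_sq -big_mkcond /=.
  by apply: eq_bigr => u _; rewrite trp_sq.
rewrite sum_row_pairs.
rewrite (eq_bigr (fun A : 'M[F]_(p, p) =>
  ((\rank A == k)%:R - ((\rank A).+1 == k)%:R) * (q ^ \rank A)%:R * wt (trp p A))); last first.
  move=> A _; rewrite (bigD1 0) //= big1 ?addr0.
    rewrite colKr (_ : col ord0 (0 : 'M[F]_(p, 1)) = 0) ?eqxx ?rank_row_mx0 ?trp_row0 //.
    by apply/matrixP => i j; rewrite !mxE.
  move=> x nx; rewrite colKr.
  suff /negbTE -> : col ord0 x != 0 by [].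
  apply: contra nx => /eqP cx; apply/eqP/matrixP => i j.
  by rewrite (ord1 j) mxE; have := congr1 (fun M : 'M[F]_(p, 1) => M i ord0) cx; rewrite !mxE.
rewrite !Ew_wt; under eq_bigr do rewrite !mulrBl.
rewrite sumrB; congr (_ - _).
  rewrite [RHS]mulr_sumr [RHS]big_mkcond; apply: eq_bigr => A _.
  by case: eqP => [->|_]; rewrite /= ?mul1r ?mul0r ?mulr0.
case: k => [|k].
  by rewrite big1 // => A _; rewrite /= !mul0r.
rewrite [RHS]mulr_sumr [RHS]big_mkcond; apply: eq_bigr => A _.
by rewrite eqSS; case: eqP => [->|_]; rewrite /= ?mul1r ?mul0r ?mulr0.
Qed.
End S.


Section T.
Variable F : finFieldType.
Local Notation q := #|F|.
Local Notation x := (#|F|%:R : rat).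
Let hq : (1 < q)%N := finRing_gt1 F.

Definition Ec r k : rat := (x - 1) * (-1) ^+ k * x ^+ 'C(k, 2) * gbinom q r k.

Lemma sum_single n m (G : 'M[F]_(n, m) -> rat) c : (n * m = 0)%N ->
  (forall A, G A = c) -> \sum_(A : 'M[F]_(n, m)) G A = c.
Proof.
move=> nm hG; rewrite (eq_bigr (fun _ => c)) // sumr_const card_mx nm expn0.
by rewrite mulr1n.
Qed.

Lemma rank_zero n m (A : 'M[F]_(n, m)) : (n * m = 0)%N -> \rank A = 0%N.
Proof.
move=> /eqP; rewrite muln_eq0 => /orP [] /eqP e; move: A; rewrite e => A;
  apply/eqP; rewrite -leqn0 ?rank_leq_row ?rank_leq_col //.
Qed.

Lemma Ew000 k : Ew F 0 0 0 k = (k == 0)%:R * (x - 1).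
Proof.
rewrite Ew_wt big_mkcond /=; apply: sum_single => // A.
rewrite rank_zero // /trp big_ord0.
by case: k => [|k] /=; rewrite /wt ?eqxx ?mul1r ?mulr1 ?mul0r.
Qed.

Lemma Ew_sq_closed p k : Ew F p p p k = Ec p k.
Proof.
elim: p k => [|p IH] k.
  rewrite Ew000 /Ec; case: k => [|k].
    by rewrite gbinom0 // expr0 bin0n expr0 !mulr1 mul1r.
  by rewrite gbinom_gt // mulr0 mul0r.
have -> : Ew F p.+1 p.+1 p.+1 k = Ew F (p + 1) (p + 1) (p + 1) k by rewrite addn1.
rewrite Ew_sq; case: k => [|k]; rewrite !IH /Ec.
  by rewrite !gbinom0 // expr0 subr0 mul1r.
rewrite (pascal hq) binS bin1 !natrX.
move: (gbinom q p k.+1) (gbinom q p k) => G1 G0.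
rewrite !exprS exprD.
by ring.
Qed.

Lemma Ew_rows r a k : Ew F r (r + a) r k = Ec r k.
Proof.
elim: a k => [|a IH] k; first by rewrite addn0 Ew_sq_closed.
have -> : Ew F r (r + a.+1) r k = Ew F r (r + a + 1) r k by rewrite addn1 addnS.
rewrite Ew_append ?leq_addr //; case: k => [|k]; rewrite !IH.
  by rewrite expn0 mul1r addr0.
rewrite !natrX.
case: (leqP k r) => kr; last first.
  by rewrite /Ec !gbinom_gt ?mulr0 ?addr0 // ltnW.
have H := gbinom_ratio hq r k.
have e1 := xfact_neq0 hq (ltn0Sn k).
rewrite /Ec.
have -> : gbinom q r k.+1 = (x ^+ (r - k) - 1) * gbinom q r k / (x ^+ k.+1 - 1).
  by rewrite -H mulrC mulrA mulVf // mul1r.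
have xr : x ^+ r = x ^+ k * x ^+ (r - k) by rewrite -exprD subnKC.
rewrite xr binS bin1.
move: e1; rewrite !exprS exprD.
move: (gbinom q r k) (x ^+ k) (x ^+ (r - k)) (x ^+ 'C(k, 2)) => G X Y Z e1.
by field; rewrite e1.
Qed.

Lemma Ew_rect r m k : (r <= m)%N -> Ew F r r m k = Ec r k.
Proof. by move=> rm; rewrite Ew_tr -(subnKC rm) Ew_rows. Qed.

Lemma Rc0 m k : Rc F 0 m k = (k == 0)%:R.
Proof.
rewrite /Rc big_mkcond /=; apply: sum_single => // A.
by rewrite rank_zero //; case: k.
Qed.

Lemma Rc_closed n m k : Rc F n m k = gbinom q n k * Pq q m k.
Proof.
elim: n k => [|n IH] k.
  rewrite Rc0; case: k => [|k]; first by rewrite gbinom0 // /Pq big_ord0 mulr1.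
  by rewrite gbinom_gt // mul0r.
have -> : Rc F n.+1 m k = Rc F (n + 1) m k by rewrite addn1.
rewrite Rc_append; case: k => [|k]; rewrite !IH.
  by rewrite !gbinom0 // expn0 mulr1n !mul1r addr0.
rewrite (pascal hq) PqS !natrX.
move: (gbinom q n k.+1) (gbinom q n k) (Pq q m k) => G1 G0 P.
by ring.
Qed.
End T.


Section W.
Variable F : finFieldType.
Local Notation q := #|F|.
Local Notation x := (#|F|%:R : rat).
Let hq : (1 < q)%N := finRing_gt1 F.
Variables (r m s : nat) (hrm : (r <= m)%N).

Definition tau0 (N : 'M[F]_(r, m)) : F := \sum_(i < r) N i (widen_ord hrm i).

Lemma tau0_trp N : tau0 N = trp r N.
Proof.
rewrite /tau0 /trp; apply: eq_bigr => i _.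
rewrite (bigD1 (widen_ord hrm i)) //= eqxx ltn_ord /= big1 ?addr0 // => j nj.
case: eqP => // e; case/eqP: nj; apply: val_inj; by rewrite /= e.
Qed.

Definition A0 : rat := \sum_(N : 'M[F]_(r, m) | \rank N == s) (tau0 N != 0)%:R.

Lemma A0E : A0 = ((x - 1) * Rc F r m s - Ew F r r m s) / x.
Proof.
have x0 : x != 0 by rewrite pnatr_eq0 -lt0n ltnW.
apply: (canRL (mulfK x0)).
rewrite /A0 /Rc Ew_wt mulr_suml mulr_sumr -sumrB; apply: eq_bigr => N _.
rewrite tau0_trp /wt; case: (trp r N == 0) => /=; ring.
Qed.

Definition topr n (M : 'M[F]_(n, m)) : 'M[F]_(r, m) :=
  \matrix_(i < r, j < m) oapp (fun i' : 'I_n => M i' j) 0 (insub (i : nat)).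

Lemma topr_top n (h : (r <= n)%N) (M : 'M[F]_(n, m)) : topr M = top_rows h M.
Proof.
apply/matrixP => i j; rewrite /top_rows !mxE.
case: insubP => [i' _ ei|]; last by rewrite (leq_trans (ltn_ord i) h).
by congr (M _ j); apply: val_inj; rewrite ei.
Qed.

Lemma topr_col n (h : (r <= n)%N) (M : 'M[F]_(n, m)) (u : 'rV[F]_m) :
  topr (col_mx M u) = topr M.
Proof.
have h' : (r <= n + 1)%N by rewrite (leq_trans h) ?leq_addr.
rewrite (topr_top h') (topr_top h); apply/matrixP => i j; rewrite /top_rows [LHS]mxE [RHS]mxE.
have -> : widen_ord h' i = lshift 1 (widen_ord h i) by apply: val_inj.
by rewrite col_mxEu.
Qed.

Definition fw (N : 'M[F]_(r, m)) : rat := ((\rank N == s) && (tau0 N != 0))%:R.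

Definition Wt n t : rat := \sum_(M : 'M[F]_(n, m) | \rank M == t) fw (topr M).

Lemma Wt_append n t : (r <= n)%N ->
  Wt (n + 1) t = (q ^ t)%:R * Wt n t +
  (if t is t'.+1 then ((q ^ m)%:R - (q ^ t')%:R) * Wt n t' else 0).
Proof.
move=> h; rewrite /Wt -(append_rec _ (fun M => fw (topr M))); apply: eq_bigr => B _.
by rewrite -{1}(vsubmxK B) (topr_col h).
Qed.

Lemma topr_id (M : 'M[F]_(r, m)) : topr M = M.
Proof.
apply/matrixP => i j; rewrite mxE.
by case: insubP => [i' _ ei|]; [congr (M _ j); apply: val_inj | rewrite ltn_ord].
Qed.

Lemma Wt_base t : Wt r t = (t == s)%:R * A0.
Proof.
rewrite /Wt /A0; under eq_bigr do rewrite topr_id.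
case: eqP => [->|ne]; rewrite ?mul1r ?mul0r.
  by apply: eq_bigr => N rk; rewrite /fw rk.
apply: big1 => N /eqP e; rewrite /fw e.
by case: eqP.
Qed.

Lemma Wt_closed (sm : (s <= m)%N) a t :
  Wt (r + a) t = if (s <= t)%N then
    A0 * x ^+ (s * a) * gbinom q a (t - s) * Pq q (m - s) (t - s) else 0.
Proof.
elim: a t => [|a IH] t.
  rewrite addn0 Wt_base; case: leqP => st.
    case: (eqVneq t s) => [->|ne].
      by rewrite subnn gbinom0 // /Pq big_ord0 muln0 expr0 !mulr1 /= mulr1n mul1r.
    by rewrite /= mulr0n mul0r gbinom_gt ?mulr0 ?mul0r // subn_gt0 ltn_neqAle eq_sym ne.
  by rewrite (ltn_eqF st) mul0r.
have -> : Wt (r + a.+1) t = Wt (r + a + 1) t by rewrite addn1 addnS.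
rewrite Wt_append ?leq_addr //.
case: (ltngtP t s) => [ts|st|->].
- case: t ts => [|t] ts; rewrite !IH !(leqNgt s) ?ts ?mulr0 ?addr0 //=.
  by rewrite (ltn_trans (ltnSn t) ts) mulr0 addr0.
- case: t st => [//|t] st; rewrite !IH (ltnW st).
  have st' : (s <= t)%N by [].

  rewrite st' subSn // (pascal hq) PqS !natrX.
  have e1 : x ^+ t = x ^+ s * x ^+ (t - s) by rewrite -exprD subnKC.
  have e2 : x ^+ m = x ^+ s * x ^+ (m - s) by rewrite -exprD subnKC.
  rewrite mulnS exprD !exprS e1 e2.
  move: (gbinom q a (t - s).+1) (gbinom q a (t - s)) (Pq q (m - s) (t - s)) => G1 G0 P.
  move: (x ^+ s) (x ^+ (t - s)) (x ^+ (m - s)) (x ^+ (s * a)) => Xs Xd Xm Xa.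
  by ring.
- rewrite IH leqnn subnn gbinom0 // /Pq big_ord0 !mulr1.
  have -> : (match s with 0%N => 0 | t'.+1 =>
     ((q ^ m)%:R - (q ^ t')%:R) * Wt (r + a) t' end) = 0 :> rat.
    by case es : s => [|s'] //; rewrite IH es ltnn mulr0.
  rewrite addr0 gbinom0 // natrX mulnS exprD.
  by ring.
Qed.
End W.

Unset Implicit Arguments.


Theorem mainTheorem16 (F : finFieldType) (r s t l m : nat)
  (ht1 : (1 <= t)%N) (htl : (t <= l)%N) (hlm : (l <= m)%N)
  (hr1 : (1 <= r)%N) (hr : (r <= l)%N) (hrm : (r <= m)%N)
  (hs1 : (1 <= s)%N) (hst : (s <= t)%N) :
  let q := #|F| in
  ((wcount F s t hr hrm)%:R : rat) =
    (q%:R - 1) / q%:R * (q%:R ^+ 'C(s, 2))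
    * (gfact q m / gfact q (m - t) - (-1) ^+ s * (gfact q (m - s) / gfact q (m - t)))
    * q%:R ^+ (s * (l - r)) * q%:R ^+ 'C(t - s, 2)
    * gbinom q r s * gbinom q (l - r) (t - s).
Proof.
move=> q; rewrite {}/q.
have hq : (1 < #|F|)%N := finRing_gt1 F.
have sm : (s <= m)%N by lia.
have E1 : ((wcount F s t hr hrm)%:R : rat) = Wt F s hrm l t.
  rewrite /wcount /Wt.
  rewrite -[LHS]mul1r -(sum_cst (fun M : 'M[F]_(l, m) => [&& \rank M == t,
        \rank (top_rows hr M) == s & tau hr hrm M != 0])).
  rewrite big_mkcondr /=; apply: eq_bigr => M _.
  rewrite (topr_top hr) /fw.
  have -> : tau hr hrm M = tau0 hrm (top_rows hr M).
    by rewrite /tau /tau0; apply: eq_bigr => i _; rewrite /top_rows mxE.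
  by case: (_ && _).
have E2 : Wt F s hrm l t = Wt F s hrm (r + (l - r)) t by rewrite subnKC.
rewrite E1 E2 Wt_closed // hst A0E Rc_closed Ew_rect // /Ec.
rewrite (PqE hq sm) (PqE hq (_ : (t - s <= m - s)%N)); last by lia.
have -> : (m - s - (t - s) = m - t)%N by lia.
have g1 := gfact_neq0 hq (m - s); have g2 := gfact_neq0 hq (m - t).
have x0 : (#|F|%:R : rat) != 0 by rewrite pnatr_eq0 -lt0n ltnW.
move: g1 g2 x0.
move: (gfact #|F| (m - s)) (gfact #|F| (m - t)) (gfact #|F| m) (#|F|%:R : rat) => G1 G2 G3 X g1 g2 x0.
move: (gbinom #|F| r s) (gbinom #|F| (l - r) (t - s)) => B1 B2.
by field; rewrite ?g1 ?g2 ?x0.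
Qed.
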